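(* Let $G$ be a group. Then $G$ is sofic as a group if and only if $G$ is sofic as a monoid.
   Context: For a non-empty finite set $X$, $\mathrm{Map}(X)$ is the monoid of all maps $X\to X$ under composition (identity $\mathrm{Id}_X$), and $\mathrm{Sym}(X)$ its group of bijections; both carry the Hamming metric $d_X(f,g)=|\{x\in X : f(x)\ne g(x)\}|/|X|$. A group $G$ is sofic as a group if for every finite $K\subset G$ and every $\varepsilon>0$ there exist a non-empty finite set $X$ and a map $\varphi\colon G\to\mathrm{Sym}(X)$ such that $d_X(\varphi(gh),\varphi(g)\varphi(h))\le\varepsilon$ for all $g,h\in K$ and $d_X(\varphi(g),\varphi(h))\ge 1-\varepsilon$ for all distinct $g,h\in K$ (the standard notion of sofic group). For a monoid $M$, finite $K\subset M$ and $\varepsilon,\alpha>0$, a map $\varphi\colon M\to\mathrm{Map}(X)$ is a $(K,\varepsilon)$-morphism if $d_X(\varphi(k_1k_2),\varphi(k_1)\varphi(k_2))\le\varepsilon$ for all $k_1,k_2\in K$ and $d_X(\varphi(1_M),\mathrm{Id}_X)\le\varepsilon$; it is $(K,\alpha)$-injective if $d_X(\varphi(k_1),\varphi(k_2))\ge\alpha$ for all distinct $k_1,k_2\in K$. A monoid $M$ is sofic (as a monoid) if for every finite $K\subset M$ and $\varepsilon>0$ there are a non-empty finite set $X$ and a $(K,1-\varepsilon)$-injective $(K,\varepsilon)$-morphism $\varphi\colon M\to\mathrm{Map}(X)$. *)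

(* Defs.v *)
From HB Require Import structures.
From mathcomp Require Import all_boot all_order all_algebra all_fingroup.
From mathcomp Require Import Rstruct.
From Stdlib Require List.
From Stdlib Require Rdefinitions.
Notation R := Rdefinitions.R.
Set Implicit Arguments.
Unset Strict Implicit.
Unset Printing Implicit Defensive.
Import Order.TTheory GRing.Theory Num.Theory.
Local Open Scope ring_scope.

Definition hamming (X : finType) (f g : X -> X) : R :=
  (#|[set x | f x != g x]|)%:R / (#|X|)%:R.

Definition fcomp (X : Type) (f g : X -> X) : X -> X := fun x => f (g x).

Definition is_monoid (M : Type) (mul : M -> M -> M) (one : M) : Prop :=
  (forall a b c, mul a (mul b c) = mul (mul a b) c) /\
  (forall a, mul one a = a) /\ (forall a, mul a one = a).

Definition is_group (G : Type) (mul : G -> G -> G) (one : G) (inv : G -> G)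
  : Prop :=
  is_monoid mul one /\
  (forall a, mul (inv a) a = one) /\ (forall a, mul a (inv a) = one).

(* Sofic as a group (finite subsets K are given by lists). *)
Definition sofic_group (G : Type) (mul : G -> G -> G) : Prop :=
  forall (K : list G) (eps : R), 0 < eps ->
  exists (X : finType) (phi : G -> {perm X}),
    (0 < #|X|)%N /\
    (forall g h, List.In g K -> List.In h K ->
       hamming (phi (mul g h)) (fcomp (phi g) (phi h)) <= eps) /\
    (forall g h, List.In g K -> List.In h K -> g <> h ->
       1 - eps <= hamming (phi g) (phi h)).

Definition KE_morphism (M : Type) (mul : M -> M -> M) (one : M)
  (K : list M) (eps : R) (X : finType) (phi : M -> X -> X) : Prop :=
  (forall k1 k2, List.In k1 K -> List.In k2 K ->
     hamming (phi (mul k1 k2)) (fcomp (phi k1) (phi k2)) <= eps) /\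
  hamming (phi one) id <= eps.

Definition KA_injective (M : Type) (K : list M) (alpha : R)
  (X : finType) (phi : M -> X -> X) : Prop :=
  forall k1 k2, List.In k1 K -> List.In k2 K -> k1 <> k2 ->
    alpha <= hamming (phi k1) (phi k2).

Definition sofic_monoid (M : Type) (mul : M -> M -> M) (one : M) : Prop :=
  forall (K : list M) (eps : R), 0 < eps ->
  exists (X : finType) (phi : M -> X -> X),
    (0 < #|X|)%N /\ KA_injective K (1 - eps) phi /\
    KE_morphism mul one K eps phi.

(* Main.v *)
Require Import Defs.
From mathcomp Require Import all_boot all_order all_algebra all_fingroup.
From mathcomp Require Import Rstruct lra zify.
From Stdlib Require List.

Set Implicit Arguments.
Unset Strict Implicit.
Unset Printing Implicit Defensive.
Import Order.TTheory GRing.Theory Num.Theory.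
Local Open Scope ring_scope.

Section Counting.
Variable X : finType.
Definition cnt (f g : X -> X) := #|[set x | f x != g x]|.

Lemma cnt_tri f g h : (cnt f h <= cnt f g + cnt g h)%N.
Proof.
rewrite /cnt; apply: leq_trans (leq_card_setU _ _).
apply: subset_leq_card; apply/subsetP => x; rewrite !inE.
case: (eqVneq (f x) (g x)) => [->|] //=.
Qed.

Lemma cnt_sym f g : cnt f g = cnt g f.
Proof. by apply: eq_card => x; rewrite !inE eq_sym. Qed.

Lemma cnt_compl f a b : (cnt (fcomp f a) (fcomp f b) <= cnt a b)%N.
Proof.
apply: subset_leq_card; apply/subsetP => x; rewrite !inE /fcomp.
by apply: contra => /eqP ->.
Qed.

Lemma cnt_compr a b (s : {perm X}) : cnt (fcomp a s) (fcomp b s) = cnt a b.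
Proof.
rewrite /cnt -[RHS](card_preimset _ (@perm_inj _ s)).
by apply: eq_card => x; rewrite !inE.
Qed.

Lemma ext_perm (A : {set X}) (f : X -> X) : {in A &, injective f} ->
  exists s : {perm X}, forall x, x \in A -> s x = f x.
Proof.
move=> fI.
pose B := ~: A; pose C := ~: (f @: A).
have cBC : #|B| = #|C|.
  have := cardsC A; have := cardsC (f @: A); rewrite card_in_imset //.
  rewrite /B /C; lia.
pose g x := if x \in A then f x else nth x (enum C) (index x (enum B)).
have gC : forall x, x \notin A -> g x \in C.
  move=> x xA; rewrite /g (negbTE xA) -mem_enum mem_nth // -cardE -cBC cardE.
  by rewrite index_mem mem_enum /B inE.
have gI : injective g.
  move=> x y; case xA: (x \in A); case yA: (y \in A).
  - by rewrite /g xA yA; apply: fI.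
  - move=> e; have := gC y (negbT yA); rewrite -e /g xA /C inE.
    by rewrite imset_f.
  - move=> e; have := gC x (negbT xA); rewrite e /g yA /C inE.
    by rewrite imset_f.
  - rewrite /g xA yA => e.
    have xB : x \in enum B by rewrite mem_enum /B inE xA.
    have yB : y \in enum B by rewrite mem_enum /B inE yA.
    have ix : (index x (enum B) < size (enum C))%N
      by rewrite -cardE -cBC cardE index_mem.
    have iy : (index y (enum B) < size (enum C))%N
      by rewrite -cardE -cBC cardE index_mem.
    move: e; rewrite (set_nth_default x y iy) => /eqP.
    rewrite nth_uniq ?enum_uniq // => /eqP e.
    by rewrite -(nth_index x xB) e nth_index.
exists (perm gI) => x xA; by rewrite permE /g xA.
Qed.

Lemma approx_perm (f h : X -> X) :
  exists s : {perm X}, (cnt f s <= cnt (fcomp f h) id)%N.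
Proof.
pose D := [set x | f (h x) == x]; pose A := h @: D.
have fI : {in A &, injective f}.
  move=> _ _ /imsetP[x xD ->] /imsetP[y yD ->] e.
  move: xD yD; rewrite !inE => /eqP ex /eqP ey.
  by rewrite -ex -ey e.
have hI : {in D &, injective h}.
  move=> x y; rewrite !inE => /eqP ex /eqP ey e.
  by rewrite -ex -ey e.
have [s sA] := ext_perm fI.
exists s.
have -> : cnt (fcomp f h) id = #|~: D|.
  by rewrite /cnt; apply: eq_card => x; rewrite !inE.
apply: (@leq_trans #|~: A|).
  apply: subset_leq_card; apply/subsetP => x; rewrite !inE.
  by apply: contraR => /negbNE /sA ->.
have := cardsC A; have := cardsC D; rewrite card_in_imset //; lia.
Qed.

Lemma hamming_cnt f g : hamming f g = (cnt f g)%:R / (#|X|)%:R.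
Proof. by []. Qed.

Lemma ham_le f g (e : R) : (0 < #|X|)%N ->
  (hamming f g <= e) = ((cnt f g)%:R <= e * (#|X|)%:R).
Proof. by move=> n0; rewrite hamming_cnt ler_pdivrMr ?ltr0n. Qed.

Lemma ham_ge f g (e : R) : (0 < #|X|)%N ->
  (e <= hamming f g) = (e * (#|X|)%:R <= (cnt f g)%:R).
Proof. by move=> n0; rewrite hamming_cnt ler_pdivlMr ?ltr0n. Qed.

End Counting.

Lemma natR_add3 (a b c : nat) : (a <= b + c)%N -> (a%:R <= b%:R + c%:R :> R).
Proof. by move=> h; rewrite -natrD ler_nat. Qed.

Lemma arith_inj (eps N cgh cgs ch cs chs : R) : 0 <= eps*N ->
  cgs <= 2*(eps/7)*N -> chs <= 2*(eps/7)*N -> cgh <= cgs + ch ->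
  ch <= cs + chs -> (1 - eps/7)*N <= cgh -> (1-eps)*N <= cs.
Proof. move=> *; lra. Qed.

Theorem proposition3p4 (G : Type) (mul : G -> G -> G) (one : G)
  (inv : G -> G) (hG : is_group mul one inv) :
  sofic_group mul <-> sofic_monoid mul one.
Proof.
have [[_ [h1l h1r]] [hinvl hinvr]] := hG.
split.
- move=> hs K eps eps0.
  have [X [phi [n0 [hm hi]]]] := hs (one :: K) eps eps0.
  exists X, (fun g x => phi g x); split; first by [].
  split.
    by move=> k1 k2 i1 i2 ne; apply: hi => //; right.
  split.
    by move=> k1 k2 i1 i2; apply: hm; right.
  have := hm one one (or_introl erefl) (or_introl erefl).
  rewrite h1l !ham_le //.
  suff -> : cnt (phi one) (fcomp (phi one) (phi one)) =
            cnt (fun x => phi one x) id by [].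
  rewrite /cnt; apply: eq_card => x; rewrite !inE /fcomp.
  by rewrite (inj_eq (@perm_inj _ _)) eq_sym.
- move=> hs K eps eps0.
  pose K1 := (K ++ List.flat_map (fun g => List.map (mul g) K) K)%list.
  pose K' := one :: (K1 ++ List.map inv K1)%list.
  have inK1 : forall g, List.In g K -> List.In g K1.
    by move=> g gK; apply: List.in_or_app; left.
  have inK1m : forall g h, List.In g K -> List.In h K -> List.In (mul g h) K1.
    move=> g h gK hK; apply: List.in_or_app; right.
    apply/List.in_flat_map; exists g; split => //.
    by apply: List.in_map.
  have inK' : forall g, List.In g K1 -> List.In g K'.
    by move=> g gK; right; apply: List.in_or_app; left.
  have inK'i : forall g, List.In g K1 -> List.In (inv g) K'.
    by move=> g gK; right; apply: List.in_or_app; right; apply: List.in_map.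
  have inK'1 : List.In one K' by left.
  pose e := eps / 7.
  have e0 : 0 < e by rewrite /e; lra.
  have [X [phi [n0 [hi [hm h1]]]]] := hs K' e e0.
  pose P g (s : {perm X}) :=
    (cnt (phi g) s <= cnt (fcomp (phi g) (phi (inv g))) id)%N.
  pose sig g := odflt 1%g [pick s | P g s].
  have sigP : forall g, P g (sig g).
    move=> g; rewrite /sig; case: pickP => [s Ps|H] //=.
    have [s Ps] := approx_perm (phi g) (phi (inv g)).
    by have := H s; rewrite /P Ps.
  pose N : R := (#|X|)%:R.
  have cs : forall g, List.In g K1 -> (cnt (phi g) (sig g))%:R <= 2 * e * N.
    move=> g gK.
    have a1 := hm _ _ (inK' _ gK) (inK'i _ gK).
    rewrite hinvr ham_le // in a1.
    rewrite ham_le // in h1.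
    have t := cnt_tri (fcomp (phi g) (phi (inv g))) (phi one) id.
    rewrite [cnt _ (phi one)]cnt_sym in t.
    have := sigP g; rewrite /P => t2.
    have t3 := leq_trans t2 t.
    have := natR_add3 t3; rewrite -/N; lra.
  exists X, sig; split; first by [].
  split.
  + move=> g h gK hK.
    rewrite ham_le // -/N.
    have gh := inK1m _ _ gK hK.
    have m := hm _ _ (inK' _ (inK1 _ gK)) (inK' _ (inK1 _ hK)).
    rewrite ham_le // -/N in m.
    have c1 := cs _ gh; have c2 := cs _ (inK1 _ gK); have c3 := cs _ (inK1 _ hK).
    have t1 := cnt_tri (sig (mul g h)) (phi (mul g h)) (fcomp (sig g) (sig h)).
    have t2 := cnt_tri (phi (mul g h)) (fcomp (phi g) (phi h)) (fcomp (sig g) (sig h)).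
    have t3 := cnt_tri (fcomp (phi g) (phi h)) (fcomp (phi g) (sig h)) (fcomp (sig g) (sig h)).
    have t4 := cnt_compl (phi g) (phi h) (sig h).
    have t5 := cnt_compr (phi g) (sig g) (sig h).
    have r1 := natR_add3 t1; have r2 := natR_add3 t2; have r3 := natR_add3 t3.
    rewrite t5 in r3.
    have {}t4 : (cnt (fcomp (phi g) (phi h)) (fcomp (phi g) (sig h)))%:R
               <= (cnt (phi h) (sig h))%:R :> R by rewrite ler_nat.
    rewrite [cnt _ (phi (mul g h))]cnt_sym in r1.
    rewrite /e in c1 c2 c3 m; lra.
  + move=> g h gK hK ne.
    rewrite ham_ge // -/N.
    have m := hi _ _ (inK' _ (inK1 _ gK)) (inK' _ (inK1 _ hK)) ne.
    rewrite ham_ge // -/N in m.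
    have c2 := cs _ (inK1 _ gK); have c3 := cs _ (inK1 _ hK).
    have t1 := cnt_tri (phi g) (sig g) (phi h).
    have t2 := cnt_tri (sig g) (sig h) (phi h).
    have r1 := natR_add3 t1; have r2 := natR_add3 t2.
    rewrite (cnt_sym (sig h)) in r2.
    have eN : 0 <= eps * N by apply: mulr_ge0; [lra| rewrite /N ler0n].
    rewrite /e in c2 c3 m; exact: (arith_inj eN c2 c3 r1 r2 m).
Qed.
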